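(* For every regular triangulation $T$ of $[0,1]^L$ there exists a generic fitness landscape $w:\{0,1\}^L\to\mathbb{R}_{\ge 0}$ that induces $T$ and whose fitness graph is the all arrows up graph, i.e. every edge of the cube is directed toward the endpoint with more $1$'s (so that fitness decreases with distance from the unique peak $1\cdots1$).
   Context: Genotypes $g\in\{0,1\}^L$ are vertices of $[0,1]^L$. The triangulation induced by a fitness landscape $w$ is the regular subdivision of $[0,1]^L$ obtained by projecting the upper faces of $\mathrm{conv}\{(g,w_g)\}\subset\mathbb{R}^{L+1}$; a triangulation is regular if it is induced in this way by some landscape; $w$ is generic if all $w_g$ are distinct and the induced subdivision is a triangulation. The fitness graph directs each edge between Hamming neighbours toward the genotype of higher fitness. *)

(* Defs.v *)
From HB Require Import structures.
From mathcomp Require Import all_boot all_order all_algebra.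
Set Implicit Arguments. Unset Strict Implicit. Unset Printing Implicit Defensive.
Import Order.TTheory GRing.Theory Num.Theory.
Local Open Scope ring_scope.

(* Genotypes: vertices g of the cube [0,1]^L, i.e. bit strings of length L. *)
Definition genotype (L : nat) := {ffun 'I_L -> bool}.

Definition coord {R : nzRingType} {L : nat} (g : genotype L) (i : 'I_L) : R :=
  (g i)%:R.

Definition aff {R : nzRingType} {L : nat} (a : 'I_L -> R) (b : R)
  (g : genotype L) : R :=
  \sum_(i < L) a i * coord g i + b.

(* A cell of the subdivision induced by w: the (nonempty) vertex set of an upper
   face of conv{(g, w g)}, i.e. the set of points where some affine function h
   with h >= w on all genotypes agrees with w. *)
Definition is_induced_cell {R : realFieldType} {L : nat}
  (w : genotype L -> R) (S : {set genotype L}) : Prop :=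
  S != set0 /\
  exists (a : 'I_L -> R) (b : R),
    forall g : genotype L, w g <= aff a b g /\ (g \in S <-> w g = aff a b g).

Definition induces {R : realFieldType} {L : nat}
  (w : genotype L -> R) (T : {set {set genotype L}}) : Prop :=
  forall S : {set genotype L}, S \in T <-> is_induced_cell w S.

Definition aff_indep {R : realFieldType} {L : nat} (S : {set genotype L}) : Prop :=
  forall c : genotype L -> R,
    (forall i : 'I_L, \sum_(g in S) c g * coord g i = 0) ->
    \sum_(g in S) c g = 0 ->
    forall g, g \in S -> c g = 0.

Definition is_triangulation (R : realFieldType) {L : nat}
  (T : {set {set genotype L}}) : Prop :=
  forall S, S \in T -> aff_indep (R := R) S.

Definition regular_triangulation (R : realFieldType) {L : nat}
  (T : {set {set genotype L}}) : Prop :=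
  exists w : genotype L -> R, induces w T /\ is_triangulation R T.

Definition generic {R : realFieldType} {L : nat} (w : genotype L -> R) : Prop :=
  injective w /\
  (forall S, is_induced_cell w S -> aff_indep (R := R) S).

Definition flip {L : nat} (g : genotype L) (i : 'I_L) : genotype L :=
  [ffun j => if j == i then ~~ g j else g j].

Definition all_arrows_up {R : realFieldType} {L : nat} (w : genotype L -> R) : Prop :=
  forall (g : genotype L) (i : 'I_L), g i = false -> w g < w (flip g i).

(* Main.v *)
Require Import Defs.
From mathcomp Require Import all_boot all_order all_algebra.
From mathcomp Require Import zify ring lra.
Import Order.TTheory GRing.Theory Num.Theory.
Local Open Scope ring_scope.

Lemma bits_lt (L : nat) (g : 'I_L -> bool) :
  (\sum_(i < L) g i * 2 ^ i < 2 ^ L)%N.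
Proof.
elim: L g => [|L IH] g; first by rewrite big_ord0.
rewrite big_ord_recr /=.
have := IH (fun i => g (widen_ord (leqnSn L) i)).
case: (g ord_max); rewrite ?mul1n ?mul0n expnS; move: (\sum_(i < L) _)%N => s; lia.
Qed.

Lemma bits_inj (L : nat) (g h : 'I_L -> bool) :
  (\sum_(i < L) g i * 2 ^ i = \sum_(i < L) h i * 2 ^ i)%N ->
  forall i, g i = h i.
Proof.
elim: L g h => [|L IH] g h; first by move=> _ [].
rewrite !big_ord_recr /=.
have := @bits_lt L (fun i => g (widen_ord (leqnSn L) i)).
have := @bits_lt L (fun i => h (widen_ord (leqnSn L) i)).
move=> hy hx e.
have eqm : g ord_max = h ord_max.
  move: e hx hy.
  move: (\sum_(i < L) g (widen_ord (leqnSn L) i) * 2 ^ i)%N => x.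
  move: (\sum_(i < L) h (widen_ord (leqnSn L) i) * 2 ^ i)%N => y.
  case: (g ord_max); case: (h ord_max) => //; rewrite ?mul1n ?mul0n; lia.
move: e; rewrite eqm => /addIn exy.
move=> i; case: (ltngtP i L) => [lt| gt|eqi].
- have -> : i = widen_ord (leqnSn L) (Ordinal lt) by apply: val_inj.
  exact: (IH (fun i => g (widen_ord (leqnSn L) i)) (fun i => h (widen_ord (leqnSn L) i)) exy).
- by move: (ltn_ord i); lia.
- have -> : i = ord_max by apply: val_inj.
  exact: eqm.
Qed.

Lemma aff_add (R : realFieldType) (L : nat) (a a' : 'I_L -> R) b b' g :
  aff (fun i => a i + a' i) (b + b') g = aff a b g + aff a' b' g.
Proof.
rewrite /aff; under eq_bigr do rewrite mulrDl; rewrite big_split /=; ring.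
Qed.

Lemma aff_opp (R : realFieldType) (L : nat) (a : 'I_L -> R) b g :
  aff (fun i => - a i) (- b) g = - aff a b g.
Proof.
rewrite /aff; under eq_bigr do rewrite mulNr; rewrite sumrN; ring.
Qed.

Lemma cell_shift (R : realFieldType) (L : nat) (w w' : genotype L -> R)
  (a' : 'I_L -> R) b' S :
  (forall g, w' g = w g + aff a' b' g) ->
  is_induced_cell w S -> is_induced_cell w' S.
Proof.
move=> hw [ne [a [b hab]]]; split => //.
exists (fun i => a i + a' i), (b + b') => g.
rewrite aff_add hw; have [h1 h2] := hab g; split; first lra.
rewrite h2; split => e; lra.
Qed.

Theorem mainTheorem6 (R : realFieldType) (L : nat)
  (T : {set {set genotype L}}) :
  regular_triangulation R T ->
  exists w : genotype L -> R,
    (forall g, 0 <= w g) /\ generic w /\ induces w T /\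
    all_arrows_up w.
Proof.
move=> [w0 [hind htri]].
pose C := \sum_(g : genotype L) `|w0 g|.
have hC g : `|w0 g| <= C.
  rewrite /C (bigD1 g) //= lerDl; apply: sumr_ge0 => *; exact: normr_ge0.
have C0 : 0 <= C by apply: sumr_ge0 => *; exact: normr_ge0.
pose K := 2 * C + 1.
pose nb (g : genotype L) := (\sum_(i < L) g i * 2 ^ i)%N.
pose a := fun i : 'I_L => K * (2 ^ i)%:R.
pose w g := w0 g + aff a C g.
have waff g : aff a C g = K * (nb g)%:R + C.
  rewrite /aff /nb natr_sum mulr_sumr; congr (_ + _); apply: eq_bigr => i _.
  by rewrite /a /coord natrM; ring.
have hcell S : is_induced_cell w0 S <-> is_induced_cell w S.
  split; first by apply: (@cell_shift R L w0 w a C S).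
  apply: (@cell_shift R L w w0 (fun i => - a i) (- C) S) => g.
  by rewrite aff_opp /w; ring.
have wE g : w g = w0 g + (K * (nb g)%:R + C) by rewrite /w waff.
have Kpos : 2 * C < K by rewrite /K; lra.
have hC' g : - C <= w0 g /\ w0 g <= C.
  by have := hC g; rewrite ler_norml => /andP.
have hn (g : genotype L) (i : 'I_L) : g i = false -> nb (flip g i) = (nb g + 2 ^ i)%N.
  move=> gi; rewrite /nb (bigD1 i) //= [in RHS](bigD1 i) //= !ffunE eqxx gi /=.
  rewrite mul1n mul0n add0n addnC; congr (_ + _)%N.
  by apply: eq_bigr => j /negbTE ji; rewrite ffunE ji.
have nbI g h : nb g = nb h -> g = h.
  by move=> e; apply/ffunP; apply: bits_inj.
have K0 : 0 <= K by rewrite /K; lra.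
clearbody w a nb K.
clear hC waff; clearbody C.
exists w; split; [|split; [split|split]].
- move=> g; rewrite wE.
  have : 0 <= K * (nb g)%:R by apply: mulr_ge0; rewrite ?ler0n; lra.
  have := hC' g; move: (K * (nb g)%:R) (w0 g) => y x [? ?] ?; lra.
- move=> g h; rewrite !wE => e.
  have [h1 h2] := hC' g; have [h3 h4] := hC' h.
  case: (ltngtP (nb g) (nb h)) => [lt|lt|eqn].
  + have d1 : 1 <= (nb h)%:R - (nb g)%:R :> R.
      by rewrite -natrB; [rewrite ler1n subn_gt0 | exact: ltnW].
    have : K <= K * (nb h)%:R - K * (nb g)%:R by rewrite -mulrBr; exact: ler_peMr.
    move: e Kpos h1 h2 h3 h4; move: (K * (nb h)%:R) (K * (nb g)%:R) (w0 g) (w0 h).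
    move=> *; exfalso; lra.
  + have d1 : 1 <= (nb g)%:R - (nb h)%:R :> R.
      by rewrite -natrB; [rewrite ler1n subn_gt0 | exact: ltnW].
    have : K <= K * (nb g)%:R - K * (nb h)%:R by rewrite -mulrBr; exact: ler_peMr.
    move: e Kpos h1 h2 h3 h4; move: (K * (nb h)%:R) (K * (nb g)%:R) (w0 g) (w0 h).
    move=> *; exfalso; lra.
  + exact: nbI.
- by move=> S /hcell /hind; apply: htri.
- by move=> S; rewrite hind.
- move=> g i gi.
  rewrite !wE hn // natrD mulrDr.
  have h1 : 1 <= (2 ^ i)%:R :> R by rewrite ler1n expn_gt0.
  have : K <= K * (2 ^ i)%:R by exact: ler_peMr.
  have [? ?] := hC' g; have [? ?] := hC' (flip g i).
  lra.
Qed.
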